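(* Let $A\in\mathbb{R}^{m\times n}$, $b\in\mathbb{R}^m$ with $Ax=b$ consistent, and let $\{x^k\}_{k\ge0}$ be generated by the RIM-AS algorithm described in the context with $\ell=\infty$ and $\Omega=\{I_m\}$ (i.e. $S_k=I_m$ for all $k$). Let $r^k=Ax^k-b$. Then for each $k\ge0$, $$\operatorname{span}\{A^\top r^0,\ldots,A^\top r^k\}=\mathcal{K}_{k+1}(A^\top A,A^\top r^0).$$
   Context: RIM-AS algorithm with $\ell=\infty$ and $S_k=I_m$: start from $x^0\in\operatorname{Range}(A^\top)$; for $k=0,1,\dots$ (as long as $Ax^k\neq b$): set $M_k=(x^0-x^k,\dots,x^{k-1}-x^k,-A^\top(Ax^k-b))\in\mathbb{R}^{n\times(k+1)}$, $\gamma_k=\|Ax^k-b\|_2^2$, let $s_k$ solve $M_k^\top M_ks_k=\gamma_ke$ with $e$ the last standard unit vector of $\mathbb{R}^{k+1}$, and set $x^{k+1}=x^k+M_ks_k$. For $B\in\mathbb{R}^{n\times n}$, $r\in\mathbb{R}^n$, the Krylov subspace is $\mathcal{K}_p(B,r)=\operatorname{span}\{r,Br,\dots,B^{p-1}r\}$. *)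

(* Defs.v *)
From mathcomp Require Import all_boot all_order all_algebra.
Set Implicit Arguments. Unset Strict Implicit. Unset Printing Implicit Defensive.
Import Order.TTheory GRing.Theory Num.Theory.
Local Open Scope ring_scope.

Section RIMAS.
Variables (R : realFieldType) (m n : nat).
Implicit Types (A : 'M[R]_(m, n)) (b : 'cV[R]_m) (x : nat -> 'cV[R]_n).

Definition resid A b x k : 'cV[R]_m := A *m x k - b.

Definition Mk A b x k : 'M[R]_(n, k.+1) :=
  \matrix_(i < n, j < k.+1)
    (if (j < k)%N then (x j - x k) i 0 else (- (A^T *m resid A b x k)) i 0).

Definition gammak A b x k : R := ((resid A b x k)^T *m resid A b x k) 0 0.

Definition elast k : 'cV[R]_(k.+1) := delta_mx ord_max 0.

Definition rimas_step A b x k : Prop :=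
  exists s : 'cV[R]_(k.+1),
    (Mk A b x k)^T *m Mk A b x k *m s = gammak A b x k *: elast k /\
    x k.+1 = x k + Mk A b x k *m s.

(* Matrix whose rows are the (transposed) vectors A^T r^0, ..., A^T r^{p-1};
   its row space is span{A^T r^0, ..., A^T r^{p-1}}. *)
Definition grad_span A b x p : 'M[R]_(p, n) :=
  \matrix_(j < p) (A^T *m resid A b x j)^T.

(* Matrix whose rows are r, B r, ..., B^{p-1} r (transposed);
   its row space is the Krylov subspace K_p(B, r). *)
Definition krylov (B : 'M[R]_n) (r : 'cV[R]_n) p : 'M[R]_(p, n) :=
  \matrix_(j < p) (B ^+ j *m r)^T.

End RIMAS.

(* Main.v *)
Require Import Defs.
From mathcomp Require Import all_boot all_order all_algebra.
Import GRing.Theory Num.Theory.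
Local Open Scope ring_scope.
Set Implicit Arguments. Unset Strict Implicit.

Section Aux.
Variables (R : realFieldType) (n : nat).

Definition dot (u v : 'cV[R]_n) : R := \sum_i u i 0 * v i 0.

Lemma dotC u v : dot u v = dot v u.
Proof. by apply: eq_bigr => i _; rewrite mulrC. Qed.

Lemma dotDl u w v : dot (u + w) v = dot u v + dot w v.
Proof. by rewrite /dot -big_split; apply: eq_bigr => i _; rewrite mxE mulrDl. Qed.

Lemma dotNl u v : dot (- u) v = - dot u v.
Proof. by rewrite /dot -sumrN; apply: eq_bigr => i _; rewrite mxE mulNr. Qed.

Lemma dotBl u w v : dot (u - w) v = dot u v - dot w v.
Proof. by rewrite dotDl dotNl. Qed.

Lemma dotDr u w v : dot v (u + w) = dot v u + dot v w.
Proof. by rewrite dotC dotDl !(dotC v). Qed.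

Lemma dotBr u w v : dot v (u - w) = dot v u - dot v w.
Proof. by rewrite dotC dotBl !(dotC v). Qed.

Lemma dot0l v : dot 0 v = 0.
Proof. by rewrite /dot big1 // => i _; rewrite mxE mul0r. Qed.

Lemma dot_mulmx m (M : 'M[R]_(m, n)) (u : 'cV[R]_m) v :
  ((u^T *m (M *m v)) 0 0) = dot (M^T *m u) v.
Proof.
rewrite /dot mxE.
under eq_bigr => i _ do rewrite !mxE big_distrr /=.
rewrite exchange_big /=; apply: eq_bigr => l _.
rewrite mxE big_distrl /=; apply: eq_bigr => i _; rewrite !mxE.
by rewrite mulrA [_ * M i l]mulrC.
Qed.

Lemma dotE (u v : 'cV[R]_n) : (u^T *m v) 0 0 = dot u v.
Proof. by rewrite mxE; apply: eq_bigr => i _; rewrite mxE. Qed.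

Lemma dot_eq0 v : dot v v = 0 -> v = 0.
Proof.
move=> h; apply/matrixP => i j; rewrite (ord1 j) mxE.
have H : forall l : 'I_n, predT l -> 0 <= v l 0 * v l 0.
  by move=> l _; rewrite -expr2 sqr_ge0.
have /eqP := psumr_eq0P H h (isT : predT i).
by rewrite -expr2 sqrf_eq0 => /eqP.
Qed.

Definition spanm p (f : nat -> 'rV[R]_n) : 'M[R]_(p, n) := \matrix_(j < p) f j.

Lemma row_spanm p f (i : 'I_p) : row i (spanm p f) = f i.
Proof. by rewrite rowK. Qed.

Lemma mem_spanm p f i : (i < p)%N -> (f i <= spanm p f)%MS.
Proof. by move=> ip; rewrite -(row_spanm f (Ordinal ip)) row_sub. Qed.

Lemma spanm_sub p q f (M : 'M[R]_(q, n)) :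
  (forall i, (i < p)%N -> (f i <= M)%MS) -> (spanm p f <= M)%MS.
Proof. by move=> h; apply/row_subP => i; rewrite row_spanm h. Qed.

Lemma spanm_mono p q f : (p <= q)%N -> (spanm p f <= spanm q f)%MS.
Proof.
by move=> pq; apply: spanm_sub => i ip; apply: mem_spanm; apply: leq_trans pq.
Qed.

Lemma trig_rank p (v w : nat -> 'cV[R]_n) :
  (forall i j, (i < j)%N -> (j < p)%N -> dot (v i) (w j) = 0) ->
  (forall i, (i < p)%N -> dot (v i) (w i) != 0) ->
  (p <= \rank (spanm p (fun i => (v i)^T)))%N.
Proof.
move=> h0 hd.
pose Q : 'M[R]_(n, p) := \matrix_(l < n, j < p) w j l 0.
have E i j : (spanm p (fun i => (v i)^T) *m Q) i j = dot (v i) (w j).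
  by rewrite mxE; apply: eq_bigr => l _; rewrite !mxE.
have := mxrankM_maxl (spanm p (fun i => (v i)^T)) Q.
rewrite mxrank_unit //.
rewrite unitmxE unitfE det_trig; last first.
  by apply/is_trig_mxP => i j ij; rewrite E h0.
by apply/prodf_neq0 => i _; rewrite E hd.
Qed.

End Aux.

Section Main.
Variables (R : realFieldType) (m n : nat) (A : 'M[R]_(m, n)) (b : 'cV[R]_m)
  (x : nat -> 'cV[R]_n).

Definition g j := A^T *m resid A b x j.

Lemma Mk_entry j (v : 'cV[R]_n) (c : 'I_j.+1) :
  ((Mk A b x j)^T *m v) c 0 =
  if (c < j)%N then dot (x c - x j) v else - dot (g j) v.
Proof.
rewrite mxE; case: ifP => cj; last rewrite /dot -sumrN;
  by apply: eq_bigr => i _; rewrite !mxE cj // ?mulNr.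
Qed.

Lemma rowMkT j (c : 'I_j.+1) :
  row c (Mk A b x j)^T = (if (c < j)%N then x c - x j else - g j)^T.
Proof. by apply/rowP => l; rewrite !mxE; case: ifP => _; rewrite !mxE. Qed.

Lemma step_orth j z : A *m z = b -> rimas_step A b x j ->
  (forall c, (c <= j)%N -> dot (x c - x j) (x j - z) = 0) ->
  (forall c, (c <= j.+1)%N -> dot (x c - x j.+1) (x j.+1 - z) = 0) /\
  (A *m x j != b -> dot (x j.+1 - x j) (x j.+1 - x j) != 0).
Proof.
move=> Az [s [hs hx]] IH.
set M := Mk A b x j in hs hx *.
set e := x j - z.
have Ae : A *m e = resid A b x j by rewrite /e mulmxBr Az.
have ge : dot (g j) e = gammak A b x j.
  by rewrite /g -dot_mulmx Ae /gammak.
have F (c : 'I_j.+1) : (M^T *m (x j.+1 - z)) c 0 = 0.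
  rewrite hx -addrA (addrC (M *m s)) addrA -/e mulmxDr mulmxA hs mxE.
  rewrite [X in _ + X]mxE Mk_entry /elast mxE.
  case: ifP => cj.
    have -> : (c == ord_max) = false.
      by apply/negbTE; apply/eqP => /(congr1 val) /= ce; rewrite ce ltnn in cj.
    by rewrite IH ?(ltnW cj) // mulr0 addr0.
  have -> : (c == ord_max) = true.
    apply/eqP/val_inj => /=; apply/eqP; rewrite eqn_leq -ltnS ltn_ord /=.
    by rewrite leqNgt cj.
  by rewrite ge mulr1 addNr.
have dj : x j.+1 - x j = M *m s by rewrite hx addrC addKr.
have F2 : dot (M *m s) (x j.+1 - z) = 0.
  rewrite -(trmxK M) -dot_mulmx mxE big1 // => c _.
  by rewrite F mulr0.
split.
  move=> c; rewrite leq_eqVlt => /orP [/eqP -> | ].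
    by rewrite subrr dot0l.
  rewrite ltnS => cj.
  have -> : x c - x j.+1 = (x c - x j) - (M *m s).
    by rewrite -dj opprB addrA subrK.
  rewrite dotBl F2 subr0.
  move: cj; rewrite leq_eqVlt => /orP [/eqP -> | cj].
    by rewrite subrr dot0l.
  have := F (Ordinal (ltn_trans cj (ltnSn j))).
  by rewrite Mk_entry /= cj.
move=> nz; rewrite dj; apply/negP => /eqP /dot_eq0 d0.
have := congr1 (fun X : 'M[R]_(j.+1, 1) => X ord_max 0) hs => /=.
rewrite -mulmxA Mk_entry /= ltnn d0 [dot _ 0]dotC dot0l oppr0.
rewrite mxE /elast mxE eqxx mulr1 => /esym g0.
move: nz; rewrite -subr_eq0 => /negP; apply.
by apply/eqP/dot_eq0; rewrite -dotE.
Qed.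

Lemma trB_sub p (u v : 'cV[R]_n) (M : 'M[R]_(p, n)) :
  (u^T <= M)%MS -> (v^T <= M)%MS -> ((u - v)^T <= M)%MS.
Proof. by move=> hu hv; rewrite linearB /= addmx_sub // eqmx_opp. Qed.

Lemma struct_step j p (M : 'M[R]_(p, n)) : rimas_step A b x j ->
  (forall c, (c < j)%N -> ((x c - x j)^T <= M)%MS) -> ((g j)^T <= M)%MS ->
  ((x j.+1 - x j)^T <= M)%MS.
Proof.
move=> [s [_ hx]] hc hg.
rewrite hx addrC addKr trmx_mul; apply: submx_trans (submxMl _ _) _.
apply/row_subP => c; rewrite rowMkT; case: ifP => cj; first exact: hc.
by rewrite linearN /= eqmx_opp.
Qed.

Definition Bm := A^T *m A.
Definition G p := spanm p (fun j => (g j)^T).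
Definition K p := spanm p (fun j => (Bm ^+ j *m g 0)^T).

Lemma gE j : g j = g 0 + Bm *m (x j - x 0).
Proof.
rewrite /g /resid /Bm !mulmxBr !mulmxA.
by rewrite [RHS]addrC addrA subrK.
Qed.

Lemma BmS i : Bm ^+ i.+1 = Bm *m Bm ^+ i.
Proof. by rewrite exprS mulmxE. Qed.

Lemma Kshift p : (K p *m Bm^T <= K p.+1)%MS.
Proof.
apply/row_subP => i; rewrite row_mul row_spanm -trmx_mul mulmxA -BmS.
by apply: (mem_spanm (fun j => (Bm ^+ j *m g 0)^T)); rewrite ltnS.
Qed.

Lemma Q_lemma k : (forall j, (j < k)%N -> rimas_step A b x j) ->
  forall j, (j <= k)%N -> forall c, (c <= j)%N -> ((x c - x 0)^T <= G j)%MS.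
Proof.
move=> hs; elim=> [|j IH] jk c.
  by rewrite leqn0 => /eqP ->; rewrite subrr linear0 sub0mx.
rewrite leq_eqVlt => /orP [/eqP -> | ].
  have -> : x j.+1 - x 0 = (x j.+1 - x j) + (x j - x 0) by rewrite addrA subrK.
  rewrite linearD /= addmx_sub //.
    apply: struct_step; first exact: hs.
      move=> c' cj; apply: submx_trans (spanm_mono _ (leqnSn j)).
      have -> : x c' - x j = (x c' - x 0) - (x j - x 0) by rewrite opprB addrA subrK.
      apply: trB_sub; first exact: IH (ltnW jk) c' (ltnW cj).
      exact: IH (ltnW jk) j (leqnn j).
    exact: (mem_spanm _ (ltnSn j)).
  apply: submx_trans (spanm_mono _ (leqnSn j)).
  exact: IH (ltnW jk) j (leqnn j).
rewrite ltnS => cj; apply: submx_trans (spanm_mono _ (leqnSn j)).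
exact: IH (ltnW jk) c cj.
Qed.

Lemma GK k : (forall j, (j < k)%N -> rimas_step A b x j) ->
  forall j, (j <= k.+1)%N -> (G j <= K j)%MS.
Proof.
move=> hs; elim=> [|j IH] jk; first by apply: spanm_sub.
apply: spanm_sub => i; rewrite ltnS leq_eqVlt => /orP [/eqP -> | ij].
  rewrite gE linearD /= addmx_sub //.
    have := @mem_spanm _ _ j.+1 (fun j => (Bm ^+ j *m g 0)^T) 0 (ltn0Sn j).
    by rewrite /= expr0 mul1mx.
  rewrite trmx_mul; apply: submx_trans (Kshift j).
  apply: submxMr; apply: submx_trans (IH (ltnW jk)).
  exact: (Q_lemma hs (jk : (j <= k)%N) (leqnn j)).
apply: submx_trans (spanm_mono _ (leqnSn j)).
apply: submx_trans (IH (ltnW jk)).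
exact: mem_spanm.
Qed.

Lemma main_sec k z : A *m z = b ->
  (forall j, (j < k)%N -> A *m x j != b) ->
  (forall j, (j < k)%N -> rimas_step A b x j) ->
  (G k.+1 == K k.+1)%MS.
Proof.
move=> Az hnz hs.
have P : forall j, (j <= k)%N -> forall c, (c <= j)%N ->
    dot (x c - x j) (x j - z) = 0.
  elim=> [|j IH] jk c.
    by rewrite leqn0 => /eqP ->; rewrite subrr dot0l.
  exact: (step_orth Az (hs j jk) (IH (ltnW jk))).1.
have Dnz : forall j, (j < k)%N -> dot (x j.+1 - x j) (x j.+1 - x j) != 0.
  move=> j jk; apply: (step_orth Az (hs j jk) (P j (ltnW jk))).2.
  exact: hnz.
have sGK : (G k.+1 <= K k.+1)%MS by apply: GK hs _ (leqnn _).
apply/andP; split => //.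
rewrite -(mxrank_leqif_sup sGK).2 eqn_leq mxrankS //=.
pose v i := if (i < k)%N then x i.+1 - x i else g k.
pose w j := x j - z.
pose p := if A *m x k == b then k else k.+1.
have pk : (p <= k.+1)%N by rewrite /p; case: ifP.
have rN : (p <= \rank (spanm p (fun i => (v i)^T)))%N.
  apply: (@trig_rank _ _ p v w).
    move=> i j ij jp.
    have jk : (j <= k)%N by rewrite -ltnS (leq_trans jp pk).
    have ik : (i < k)%N by apply: leq_trans ij jk.
    rewrite /v ik /w.
    have -> : x i.+1 - x i = (x i.+1 - x j) - (x i - x j).
      by rewrite opprB addrA subrK.
    by rewrite dotBl !P // ?subr0 // ltnW.
  move=> i ip; rewrite /v /w; case: ifP => ik.
    have -> : x i - z = (x i.+1 - z) - (x i.+1 - x i).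
      by rewrite opprB [RHS]addrC addrA subrK.
    have h0 : dot (x i.+1 - x i) (x i.+1 - z) = 0.
      by rewrite -[x i.+1 - x i]opprB dotNl P // oppr0.
    by rewrite dotBr h0 sub0r oppr_eq0 Dnz.
  have ei : i = k.
    by apply/eqP; rewrite eqn_leq -ltnS (leq_trans ip pk) leqNgt ik.
  subst i.
  have nzk : A *m x k != b.
    by apply/negP => hb; move: ip; rewrite /p hb ltnn.
  rewrite /g -dot_mulmx mulmxBr Az dotE.
  apply/negP => /eqP /dot_eq0 /eqP; rewrite /resid subr_eq0.
  by apply/negP.
have NG : (spanm p (fun i => (v i)^T) <= G k.+1)%MS.
  apply: spanm_sub => i ip; rewrite /v; case: ifP => ik.
    apply: submx_trans (spanm_mono _ (leqnSn k)).
    have -> : x i.+1 - x i = (x i.+1 - x 0) - (x i - x 0).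
      by rewrite opprB addrA subrK.
    by apply: trB_sub; apply: (Q_lemma hs (leqnn k)) => //; apply: ltnW.
  exact: (mem_spanm _ (ltnSn k)).
have rK : (\rank (K k.+1) <= p)%N.
  rewrite /p; case: ifP => hb; last exact: rank_leq_row.
  apply: leq_trans (rank_leq_row (K k)).
  apply: leq_trans (mxrankM_maxl (K k) Bm^T).
  apply: mxrankS; apply: spanm_sub => i; case: i => [_ | i ik].
    rewrite expr0 mul1mx.
    have gk0 : g k = 0 by rewrite /g /resid (eqP hb) subrr mulmx0.
    have -> : g 0 = - (Bm *m (x k - x 0)).
      by apply/eqP; rewrite -addr_eq0 -gE gk0.
    rewrite linearN /= eqmx_opp trmx_mul; apply: submxMr.
    apply: submx_trans (GK hs (leqnSn k)).
    exact: (Q_lemma hs (leqnn k) (leqnn k)).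
  rewrite BmS -mulmxA trmx_mul; apply: submxMr.
  exact: (mem_spanm (fun j => (Bm ^+ j *m g 0)^T)).
by apply: leq_trans rK (leq_trans rN (mxrankS NG)).
Qed.
End Main.

Unset Implicit Arguments.

Theorem lemma4p2 (R : realFieldType) (m n : nat)
  (A : 'M[R]_(m, n)) (b : 'cV[R]_m) (x : nat -> 'cV[R]_n) (k : nat) :
  (exists z : 'cV[R]_n, A *m z = b) ->
  (exists y : 'cV[R]_m, x 0%N = A^T *m y) ->
  (forall j, (j < k)%N -> A *m x j != b) ->
  (forall j, (j < k)%N -> rimas_step A b x j) ->
  (grad_span A b x k.+1 == krylov (A^T *m A) (A^T *m resid A b x 0%N) k.+1)%MS.
Proof.
move=> [z Az] _ hnz hs.
exact: (main_sec Az hnz hs).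
Qed.
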